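(* Let $\Pi$ be a boolean (possibly recursive) Datalog query with propositional answer atom $\mathit{ans}$, and let $D=D^x\cup D^n$ be a relational instance partitioned into disjoint sets of exogenous tuples $D^x$ and endogenous tuples $D^n$, with $\Pi\cup D\models \mathit{ans}$. Let $\mathcal{AP}^c=\langle \Pi, D^x, D^n, \mathit{ans}\rangle$ be the associated Datalog abduction problem (extensional database $D^x$, hypotheses $D^n$, observation $\mathit{ans}$). Then a tuple $t\in D^n$ is an actual cause for $\mathit{ans}$ if and only if $t\in \mathit{Rel}(\mathcal{AP}^c)$.
   Context: A boolean Datalog query is a finite set $\Pi$ of positive Datalog rules containing a rule defining a propositional atom $\mathit{ans}$; the query is true on instance $D$ (written $\Pi\cup D\models\mathit{ans}$) if $\mathit{ans}$ belongs to the minimal model of $\Pi\cup D$. Database predicates of $D$ do not occur in rule heads. A tuple $\tau\in D^n$ is a counterfactual cause for $\mathit{ans}$ in an instance $D'$ if $\Pi\cup D'\models\mathit{ans}$ and $\Pi\cup (D'\smallsetminus\{\tau\})\not\models\mathit{ans}$; $\tau\in D^n$ is an actual cause for $\mathit{ans}$ if there is a contingency set $\Gamma\subseteq D^n$ such that $\tau$ is a counterfactual cause for $\mathit{ans}$ in $D\smallsetminus\Gamma$. For a Datalog abduction problem $\langle\Pi,E,\mathit{Hyp},\mathit{Obs}\rangle$, an abductive diagnosis is a subset-minimal $\Delta\subseteq\mathit{Hyp}$ with $\Pi\cup E\cup\Delta\models\mathit{Obs}$, and $\mathit{Rel}$ denotes the set of hypotheses belonging to at least one abductive diagnosis. *)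

(* Defs.v *)
From Stdlib Require Import List.
Import ListNotations.
Set Implicit Arguments.

Section Datalog.
(* P: predicate symbols, C: constants, V: variables *)
Variables P C V : Type.

Inductive term : Type := TVar (v : V) | TConst (c : C).

Record atom : Type := Atom { apred : P; aargs : list term }.
Record gatom : Type := GAtom { gpred : P; gargs : list C }.
Record rule : Type := Rule { rhead : atom; rbody : list atom }.

Definition program := list rule.

Definition gterm (s : V -> C) (t : term) : C :=
  match t with TVar v => s v | TConst c => c end.

Definition ground (s : V -> C) (a : atom) : gatom :=
  GAtom (apred a) (map (gterm s) (aargs a)).

Definition vars_of_atom (a : atom) : list V :=
  flat_map (fun t => match t with TVar v => [v] | TConst _ => [] end) (aargs a).

Definition safe_rule (r : rule) : Prop :=
  forall v, In v (vars_of_atom (rhead r)) ->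
    exists b, In b (rbody r) /\ In v (vars_of_atom b).

Definition instance := gatom -> Prop.

(* Minimal model of Pi u D: the least set containing D and closed under
   the ground instances of the rules of Pi. *)
Inductive models (Pi : program) (D : instance) : gatom -> Prop :=
| models_fact : forall a, D a -> models Pi D a
| models_rule : forall r s, In r Pi ->
    (forall b, In b (rbody r) -> models Pi D (ground s b)) ->
    models Pi D (ground s (rhead r)).

Definition ans_atom (ans : P) : gatom := GAtom ans [].

Definition boolean_query (Pi : program) (ans : P) : Prop :=
  (forall r, In r Pi -> safe_rule r) /\
  (exists r, In r Pi /\ rhead r = Atom ans []) /\
  (forall r, In r Pi -> apred (rhead r) = ans -> aargs (rhead r) = []).

Definition edb_only (Pi : program) (D : instance) : Prop :=
  forall t r, D t -> In r Pi -> apred (rhead r) <> gpred t.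

Definition set_minus (D : instance) (G : gatom -> Prop) : instance :=
  fun a => D a /\ ~ G a.

Definition set_union (D1 D2 : instance) : instance :=
  fun a => D1 a \/ D2 a.

Definition counterfactual_cause (Pi : program) (ans : P) (D' : instance)
  (t : gatom) : Prop :=
  models Pi D' (ans_atom ans) /\
  ~ models Pi (set_minus D' (fun a => a = t)) (ans_atom ans).

Definition actual_cause (Pi : program) (ans : P) (Dx Dn : list gatom)
  (t : gatom) : Prop :=
  In t Dn /\
  exists G : gatom -> Prop, (forall a, G a -> In a Dn) /\
    counterfactual_cause Pi ans
      (set_minus (fun a => In a Dx \/ In a Dn) G) t.

Definition entails_obs (Pi : program) (D : instance) (Obs : list gatom) :=
  forall o, In o Obs -> models Pi D o.

Definition is_diagnosis (Pi : program) (E Hyp : list gatom) (Obs : list gatom)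
  (Delta : gatom -> Prop) : Prop :=
  (forall a, Delta a -> In a Hyp) /\
  entails_obs Pi (set_union (fun a => In a E) Delta) Obs /\
  (forall Delta' : gatom -> Prop, (forall a, Delta' a -> Delta a) ->
     entails_obs Pi (set_union (fun a => In a E) Delta') Obs ->
     forall a, Delta a -> Delta' a).

Definition Rel (Pi : program) (E Hyp Obs : list gatom) (h : gatom) : Prop :=
  In h Hyp /\ exists Delta, is_diagnosis Pi E Hyp Obs Delta /\ Delta h.

End Datalog.

(* Main.v *)
Require Import Defs.
From Stdlib Require Import List Classical ClassicalEpsilon Lia.

Lemma models_mono {P C V : Type} {Pi : program P C V} {D D' : instance P C} {a} :
  models Pi D a -> (forall x, D x -> D' x) -> models Pi D' a.
Proof.
  intros H Hs; induction H.
  - apply models_fact; auto.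
  - apply models_rule; auto.
Qed.

Definition dec {A : Type} (Q : A -> Prop) (x : A) : bool :=
  if excluded_middle_informative (Q x) then true else false.

Lemma dec_true {A} (Q : A -> Prop) x : dec Q x = true <-> Q x.
Proof. unfold dec; destruct excluded_middle_informative; split; congruence || tauto. Qed.

Lemma filter_lt A (f g : A -> bool) (l : list A) :
  (forall x, In x l -> f x = true -> g x = true) ->
  (exists x, In x l /\ g x = true /\ f x = false) ->
  length (filter f l) < length (filter g l).
Proof.
  induction l as [|y l IH]; simpl; intros H [x [Hx [Hg Hf]]]; [contradiction|].
  assert (Hle : forall l', (forall x, In x l' -> f x = true -> g x = true) ->
     length (filter f l') <= length (filter g l')).
  { induction l' as [|z l' IH']; simpl; intros H'; auto.
    specialize (IH' (fun x Hx => H' x (or_intror Hx))).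
    destruct (f z) eqn:E1; [rewrite (H' z (or_introl eq_refl) E1); simpl; lia|].
    destruct (g z); simpl; lia. }
  destruct Hx as [<-|Hx].
  - rewrite Hg, Hf; simpl.
    specialize (Hle l (fun x Hx => H x (or_intror Hx))); lia.
  - assert (IH' := IH (fun x Hx => H x (or_intror Hx)) (ex_intro _ x (conj Hx (conj Hg Hf)))).
    destruct (f y) eqn:E1; [rewrite (H y (or_introl eq_refl) E1); simpl; lia|].
    destruct (g y); simpl; lia.
Qed.

Theorem proposition2 (P C V : Type) (Pi : program P C V) (ans : P)
  (Dx Dn : list (gatom P C)) :
  boolean_query Pi ans ->
  edb_only Pi (fun a => In a Dx \/ In a Dn) ->
  (forall a, In a Dx -> ~ In a Dn) ->
  models Pi (fun a => In a Dx \/ In a Dn) (ans_atom C ans) ->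
  forall t, In t Dn ->
    (actual_cause Pi ans Dx Dn t <-> Rel Pi Dx Dn (ans_atom C ans :: nil) t).
Proof.
  intros _ _ Hdisj _ t Ht. split.
  - intros [_ [G [HG [Hm Hnm]]]].
    set (good := fun Delta : gatom P C -> Prop =>
      (forall a, Delta a -> In a Dn /\ ~ G a) /\
      models Pi (set_union (fun a => In a Dx) Delta) (ans_atom C ans)).
    set (m := fun Delta : gatom P C -> Prop => length (filter (dec Delta) Dn)).
    assert (Hmin : forall n Delta, good Delta -> m Delta <= n ->
      exists D0, good D0 /\ forall D', (forall a, D' a -> D0 a) ->
        models Pi (set_union (fun a => In a Dx) D') (ans_atom C ans) ->
        forall a, D0 a -> D' a).
    { assert (Hstep : forall Delta, good Delta ->
        (forall D', (forall a, D' a -> Delta a) ->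
          models Pi (set_union (fun a => In a Dx) D') (ans_atom C ans) ->
          forall a, Delta a -> D' a) \/ exists D', good D' /\ m D' < m Delta).
      { intros Delta Hg.
        destruct (classic (forall D', (forall a, D' a -> Delta a) ->
          models Pi (set_union (fun a => In a Dx) D') (ans_atom C ans) ->
          forall a, Delta a -> D' a)) as [Hy|Hn]; [left; auto|right].
        apply not_all_ex_not in Hn; destruct Hn as [D' Hn].
        apply imply_to_and in Hn; destruct Hn as [Hsub Hn].
        apply imply_to_and in Hn; destruct Hn as [HmD' Hn].
        apply not_all_ex_not in Hn; destruct Hn as [a Hn].
        apply imply_to_and in Hn; destruct Hn as [Ha Hna].
        exists D'. split.
        - split; [intros x Hx; apply (proj1 Hg); auto| auto].
        - apply filter_lt.
          + intros x _ Hx. apply (proj2 (dec_true Delta x)). apply Hsub. apply (proj1 (dec_true D' x)); exact Hx.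
          + exists a; split; [apply (proj1 Hg); auto|split].
            * apply (proj2 (dec_true Delta a)); auto.
            * unfold dec; destruct (excluded_middle_informative (D' a)); [contradiction|reflexivity]. }
      induction n as [|n IH]; intros Delta Hg Hle;
        destruct (Hstep Delta Hg) as [Hy|[D' [HgD' Hlt]]].
      - exists Delta; auto.
      - lia.
      - exists Delta; auto.
      - apply (IH D'); auto; lia. }
    assert (Hg0 : good (fun a => In a Dn /\ ~ G a)).
    { split; auto. apply (models_mono Hm).
      intros x [[Hx|Hx] Hgx]; [left; auto|right; auto]. }
    destruct (Hmin _ _ Hg0 (le_n _)) as [D0 [[Hs HD0] Hmin0]].
    split; auto. exists D0. split.
    + split; [intros a Ha; apply Hs; auto|]. split.
      * intros o [<-|[]]; auto.
      * intros D' Hsub He a Ha. apply (Hmin0 D' Hsub); auto. apply He; simpl; auto.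
    + apply NNPP; intros Hnt. apply Hnm. apply (models_mono HD0).
      intros x [Hx|Hx].
      * split; [split; [left; auto|intros Gx; apply (Hdisj x Hx), HG, Gx]|].
        intros ->. apply (Hdisj t Hx Ht).
      * destruct (Hs x Hx) as [Hin HnG]. split; [split; [right; auto|auto]|].
        intros ->. contradiction.
  - intros [_ [Delta [[Hs [He Hmin]] Hd]]].
    split; auto. exists (fun a => In a Dn /\ ~ Delta a).
    split; [intros a [Ha _]; auto|]. split.
    + apply (models_mono (He _ (or_introl eq_refl))).
      intros x [Hx|Hx]; split; auto.
      * intros [Hn _]; apply (Hdisj x Hx Hn).
      * intros [_ Hn]; auto.
    + intros Hm.
      assert (Hc : forall a, Delta a -> (fun b => Delta b /\ b <> t) a).
      { apply Hmin; [intros a [Ha _]; auto|].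
        intros o [<-|[]]. apply (models_mono Hm).
        intros x [[[Hx|Hx] HnG] Hnt].
        - left; auto.
        - right; split; auto. apply NNPP; intros Hnd; apply HnG; auto. }
      destruct (Hc t Hd); auto.
Qed.
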